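(* Let $\mathbb{F}$ be a field with $\operatorname{char}\mathbb{F}\neq 2$, let $V$ be a finite-dimensional $\mathbb{F}$-vector space of odd dimension $n$, and let $Q:V\to\mathbb{F}$ be a non-degenerate quadratic form with polarization $b$. Let $G\leq O(V,Q)$ be a finite solvable subgroup that acts irreducibly on $V$. Then there exists an orthogonal decomposition $V=W_1\perp\cdots\perp W_n$ (orthogonal with respect to $b$) such that $\dim W_i=1$ for all $1\leq i\leq n$ and $G$ permutes the set $\{W_1,\ldots,W_n\}$.
   Context: $O(V,Q)=\{g\in\operatorname{GL}(V): Q(gv)=Q(v)\text{ for all }v\in V\}$ is the isometry group of $Q$. ''Irreducible'' means $V$ has no $G$-invariant subspaces other than $0$ and $V$. *)

(* Defs.v *)
From HB Require Import structures.
From mathcomp Require Import all_boot all_order all_algebra all_fingroup all_solvable.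
From mathcomp Require Import mxrepresentation.
Set Implicit Arguments. Unset Strict Implicit. Unset Printing Implicit Defensive.
Import GRing.Theory.
Local Open Scope ring_scope.

Definition polar (F : fieldType) (n : nat) (Q : 'rV[F]_n -> F) (u v : 'rV[F]_n) : F :=
  Q (u + v) - Q u - Q v.

Definition is_quadform (F : fieldType) (n : nat) (Q : 'rV[F]_n -> F) : Prop :=
  (forall (a : F) v, Q (a *: v) = a ^+ 2 * Q v) /\
  (forall u v w, polar Q (u + v) w = polar Q u w + polar Q v w) /\
  (forall (a : F) u v, polar Q (a *: u) v = a * polar Q u v).

Definition qf_nondegenerate (F : fieldType) (n : nat) (Q : 'rV[F]_n -> F) : Prop :=
  forall u, (forall v, polar Q u v = 0) -> u = 0.

(* Main.v *)
Require Import Defs.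
From HB Require Import structures.
From mathcomp Require Import all_boot all_order all_algebra all_fingroup all_solvable.
From mathcomp Require Import mxrepresentation.
From Stdlib Require Import Classical.
From mathcomp Require Import zify.
Set Implicit Arguments. Unset Strict Implicit. Unset Printing Implicit Defensive.
Import GRing.Theory.
Local Open Scope ring_scope.

Lemma clP (P : Prop) : classically P -> P.
Proof. by move/classicP => nnP; apply: NNPP. Qed.

Lemma mx_eq_bil (F : fieldType) n (A C : 'M[F]_n) :
  (forall u v : 'rV_n, (u *m A *m v^T) 0 0 = (u *m C *m v^T) 0 0) -> A = C.
Proof.
move=> H; apply/matrixP => i j; have := H (delta_mx 0 i) (delta_mx 0 j).
by rewrite -!rowE trmx_delta -!colE !mxE.
Qed.

Section Form.
Variables (F : fieldType) (n : nat) (Q : 'rV[F]_n -> F).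
Hypothesis qfQ : is_quadform Q.
Local Notation b := (polar Q).

Lemma polarC u v : b u v = b v u.
Proof. by rewrite /polar [u + v]addrC -!addrA [- Q u + _]addrC. Qed.

Lemma polarDl u v w : b (u + v) w = b u w + b v w.
Proof. by case: qfQ => _ []. Qed.
Lemma polarZl a u v : b (a *: u) v = a * b u v.
Proof. by case: qfQ => _ []. Qed.
Lemma polarDr u v w : b w (u + v) = b w u + b w v.
Proof. by rewrite !(polarC w) polarDl. Qed.
Lemma polarZr a u v : b v (a *: u) = a * b v u.
Proof. by rewrite !(polarC v) polarZl. Qed.
Lemma polar0l v : b 0 v = 0.
Proof. by rewrite -(scale0r 0) polarZl mul0r. Qed.
Lemma polarNl u v : b (- u) v = - b u v.
Proof. by rewrite -scaleN1r polarZl mulN1r. Qed.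
Lemma polarBl u w v : b (u - w) v = b u v - b w v.
Proof. by rewrite polarDl polarNl. Qed.
Lemma polarNr u v : b v (- u) = - b v u.
Proof. by rewrite !(polarC v) polarNl. Qed.
Lemma polarBr u w v : b v (u - w) = b v u - b v w.
Proof. by rewrite polarDr polarNr. Qed.

Lemma polar_suml m (f : 'I_m -> 'rV_n) v :
  b (\sum_i f i) v = \sum_i b (f i) v.
Proof.
by apply: (big_morph (fun u => b u v)) => [x y|]; rewrite ?polarDl ?polar0l.
Qed.
Lemma polar_sumr m (f : 'I_m -> 'rV_n) v :
  b v (\sum_i f i) = \sum_i b v (f i).
Proof. by rewrite polarC polar_suml; apply: eq_bigr => i _; rewrite polarC. Qed.

Definition gram : 'M[F]_n := \matrix_(i, j) b (delta_mx 0 i) (delta_mx 0 j).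

Lemma polar_gram u v : b u v = (u *m gram *m v^T) 0 0.
Proof.
rewrite {1}(row_sum_delta u) {1}(row_sum_delta v) polar_suml !mxE.
rewrite [RHS](eq_bigr (fun j => \sum_i u 0 i * gram i j * v 0 j)); last first.
  by move=> j _; rewrite !mxE mulr_suml.
rewrite exchange_big /=; apply: eq_bigr => i _.
rewrite polarZl polar_sumr mulr_sumr; apply: eq_bigr => j _.
by rewrite polarZr !mxE mulrA mulrAC.
Qed.

Lemma polarJ (X : 'M_n) : (forall v, Q (v *m X) = Q v) ->
  forall u v, b (u *m X) (v *m X) = b u v.
Proof. by move=> hX u v; rewrite /polar -mulmxDl !hX. Qed.

Lemma gramJ (X : 'M_n) : (forall v, Q (v *m X) = Q v) ->
  X *m gram *m X^T = gram.
Proof.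
move=> hX; apply: mx_eq_bil => u v.
by rewrite -polar_gram -(polarJ hX) polar_gram !mulmxA trmx_mul !mulmxA.
Qed.

Lemma skew_XXinv (X : 'M_n) : X \in unitmx -> (forall v, Q (v *m X) = Q v) ->
  forall u v, b (u *m (X - invmx X)) v = - b u (v *m (X - invmx X)).
Proof.
move=> uX hX u v; rewrite !mulmxBr polarBl polarBr [in RHS]opprB.
rewrite -{1}[v](mulmxKV uX) (polarJ hX) -(polarJ hX (u *m invmx X)) mulmxKV //.
Qed.

Hypothesis ndQ : qf_nondegenerate Q.

Lemma gram_unit : gram \in unitmx.
Proof.
rewrite -row_free_unit -kermx_eq0; apply/negPn/negP => nz.
have uK : nz_row (kermx gram) *m gram = 0 by apply/sub_kermxP; apply: nz_row_sub.
move: nz; rewrite -nz_row_eq0 (ndQ (u := nz_row (kermx gram))) ?eqxx // => v.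
by rewrite polar_gram uK mul0mx mxE.
Qed.

Lemma polar_eq u w : (forall v, b u v = b w v) -> u = w.
Proof.
move=> H; apply/eqP; rewrite -subr_eq0; apply/eqP; apply: ndQ => v.
by rewrite polarBl H subrr.
Qed.

Lemma mx_eq_polar (A C : 'M_n) :
  (forall u v, b (u *m A) v = b (u *m C) v) -> A = C.
Proof.
by move=> H; apply/row_matrixP => i; rewrite !rowE; apply: polar_eq => v; apply: H.
Qed.

Definition adj (A : 'M_n) := gram *m A^T *m invmx gram.

Lemma adjP A u v : b (u *m adj A) v = b u (v *m A).
Proof.
by rewrite !polar_gram /adj !mulmxA (mulmxKV gram_unit) trmx_mul !mulmxA.
Qed.

Definition perp m (U : 'M_(m, n)) : 'M_n := kermx (gram *m U^T).

Lemma perpP m (U : 'M_(m, n)) (v : 'rV_n) :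
  reflect (forall u : 'rV_n, (u <= U)%MS -> b v u = 0) (v <= perp U)%MS.
Proof.
apply: (iffP sub_kermxP) => [vU u /submxP[D ->] | H].
  by rewrite polar_gram trmx_mul !mulmxA -(mulmxA v gram) vU !mul0mx mxE.
apply/matrixP => k i; rewrite (_ : (v *m _) k i = b v (row i U)).
  by rewrite H ?row_sub // mxE.
by rewrite ord1 polar_gram tr_row colE !mulmxA -colE /col mxE.
Qed.

Lemma perp_sub m1 m2 (U : 'M_(m1, n)) (V : 'M_(m2, n)) :
  (V <= perp U)%MS = (V *m gram *m U^T == 0).
Proof. by rewrite sub_kermx mulmxA. Qed.

Lemma perpC m1 m2 (U : 'M_(m1, n)) (V : 'M_(m2, n)) :
  (V <= perp U)%MS = (U <= perp V)%MS.
Proof.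
apply/rV_subP/rV_subP => H v vX; apply/perpP => u uY; rewrite polarC;
  by move/perpP: (H u uY); apply.
Qed.

Lemma rank_perp m (U : 'M_(m, n)) : \rank (perp U) = (n - \rank U)%N.
Proof.
rewrite mxrank_ker -mxrank_tr trmx_mul trmxK mxrankMfree //.
by rewrite row_free_unit unitmx_tr gram_unit.
Qed.

Lemma perp1 m (U : 'M_(m, n)) : (1%:M <= perp U)%MS -> U = 0.
Proof.
move=> H; apply/eqP; rewrite -submx0; apply/rV_subP => v vU.
rewrite submx0; apply/eqP; apply: ndQ => w; rewrite polarC.
by apply/perpP: v vU; apply: submx_trans (submx1 _) H.
Qed.

Hypothesis two : (2%:R : F) != 0.
Hypothesis oddn : odd n.

Lemma skew_singular D :
  (forall u v, b (u *m D) v = - b u (v *m D)) -> ~~ (D \in unitmx).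
Proof.
move=> sk; have e : D *m gram = - (gram *m D^T).
  apply: mx_eq_bil => u v.
  by rewrite !mulmxA -polar_gram sk polar_gram mulmxN mulNmx [in RHS]mxE trmx_mul !mulmxA.
have := congr1 determinant e; rewrite -scaleN1r detZ -signr_odd oddn expr1.
rewrite !det_mulmx det_tr mulN1r mulrC => /eqP; rewrite -subr_eq0 opprK.
rewrite -mulr2n -mulr_natr mulf_eq0 (negPf two) orbF mulf_eq0.
have := gram_unit; rewrite unitmxE unitfE => /negPf -> /= /eqP d0.
by rewrite unitmxE d0 unitr0.
Qed.

Lemma anti_conj_singular (X Y : 'M[F]_n) :
  X \in unitmx -> Y \in unitmx -> invmx Y *m X *m Y = - X -> False.
Proof.
move=> uX uY e; have := congr1 determinant e.
rewrite -scaleN1r detZ -signr_odd oddn expr1 !det_mulmx det_inv mulrAC.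
rewrite mulVf; last by rewrite -unitfE -unitmxE.
rewrite mul1r => /eqP; rewrite -subr_eq0 mulN1r opprK -mulr2n -mulr_natr.
rewrite mulf_eq0 (negPf two) orbF; move: uX; rewrite unitmxE unitfE.
by move/negPf ->.
Qed.

End Form.

Lemma inv_fixpoint (T : finType) (s : T -> T) :
  involutive s -> odd #|T| -> exists x, s x = x.
Proof.
move=> sK oddT; case: (pickP (fun x => s x == x)) => [x /eqP| nofix]; first by exists x.
exfalso; set A := [set x : T | (enum_rank x < enum_rank (s x))%N].
have cover : [set: T] = A :|: s @: A.
  apply/setP => x; rewrite in_setT in_setU; symmetry; apply/orP.
  case: (ltngtP (enum_rank x) (enum_rank (s x))) => [lt|gt|e].
  - by left; rewrite inE.
  - right; apply/imsetP; exists (s x); last by rewrite sK.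
    by rewrite inE sK.
  - by move: e => /val_inj/enum_rank_inj e; move: (nofix x); rewrite -e eqxx.
have disj : A :&: s @: A = set0.
  apply/setP => x; rewrite !inE; apply/negP => /andP[xA /imsetP[y yA ey]].
  move: xA yA; rewrite !inE ey sK => lt1 lt2.
  by move: (ltn_trans lt1 lt2); rewrite ltnn.
have := cardsUI A (s @: A); rewrite -cover disj cards0 addn0 cardsT.
rewrite card_imset; last exact: inv_inj sK.
by move=> e; move: oddT; rewrite e addnn odd_double.
Qed.
Definition orth_fam (F : fieldType) n (Q : 'rV[F]_n -> F) (gT : finGroupType)
  (G : {set gT}) (rep : gT -> 'M[F]_n) (I : finType) (v : I -> 'rV[F]_n) :=
  [/\ forall i, polar Q (v i) (v i) != 0,
      forall i j, i != j -> polar Q (v i) (v j) = 0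
    & forall g, g \in G -> forall i, exists j, exists c : F, v i *m rep g = c *: v j].

Definition orth_basis (F : fieldType) n (Q : 'rV[F]_n -> F) (gT : finGroupType)
  (G : {set gT}) (rep : gT -> 'M[F]_n) :=
  exists v : 'I_n -> 'rV[F]_n, orth_fam Q G rep v.

Lemma orth_fam_reindex (F : fieldType) n (Q : 'rV[F]_n -> F) (gT : finGroupType)
  (G : {set gT}) (rep : gT -> 'M[F]_n) (I : finType) (v : I -> 'rV[F]_n) :
  #|I| = n -> orth_fam Q G rep v -> orth_basis Q G rep.
Proof.
move=> eI [an or pm].
pose e (i : 'I_n) : I := enum_val (cast_ord (esym eI) i).
pose e' (j : I) : 'I_n := cast_ord eI (enum_rank j).
have ee j : e (e' j) = j by rewrite /e /e' cast_ordK enum_rankK.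
exists (fun i => v (e i)); split => //.
- move=> i j nij; apply: or; apply: contra nij => /eqP h; apply/eqP.
  by move/enum_val_inj/cast_ord_inj: h.
- move=> g Gg i; have [j [c h]] := pm g Gg (e i).
  by exists (e' j), c; rewrite ee.
Qed.

Definition main_stmt (F : fieldType) (n : nat) :=
  forall (gT : finGroupType) (G : {group gT}) (rG : mx_representation F G n)
    (Q : 'rV[F]_n -> F),
  (2%:R : F) != 0 -> odd n -> is_quadform Q -> qf_nondegenerate Q ->
  (forall g, g \in G -> forall v, Q (v *m rG g) = Q v) ->
  solvable G -> mx_irreducible rG -> orth_basis Q G rG.
Section Cliff.
Variables (F : fieldType) (gT : finGroupType) (G M : {group gT}) (n : nat).
Hypothesis nsMG : (M <| G)%g.
Variables (rG : mx_representation F G n) (Q : 'rV[F]_n -> F).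
Hypotheses (qfQ : is_quadform Q) (ndQ : qf_nondegenerate Q).
Hypothesis irrG : mx_irreducible rG.
Hypothesis invQ : forall g, g \in G -> forall v, Q (v *m rG g) = Q v.
Local Notation rM := (subg_repr rG (normal_sub nsMG)).
Variable sH : socleType rM.
Local Notation b := (polar Q).
Local Notation perp := (perp Q).

Let sMG := normal_sub nsMG.

Lemma perpJ g m1 m2 (A : 'M_(m1, n)) (B : 'M_(m2, n)) : g \in G ->
  (A *m rG g <= perp (B *m rG g))%MS = (A <= perp B)%MS.
Proof.
move=> Gg; rewrite !perp_sub trmx_mul !mulmxA -(mulmxA A (rG g) (gram Q)).
by rewrite -(mulmxA A (rG g *m gram Q)) (gramJ qfQ (invQ Gg)).
Qed.

Lemma perp_module (U : 'M_n) : mxmodule rM U -> mxmodule rM (perp U).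
Proof.
move=> modU; apply/mxmoduleP => x Mx; have Gx := subsetP sMG x Mx.
have sUUX : (U <= U *m rG x)%MS.
  rewrite -{1}(repr_mxKV rG Gx U) submxMr //.
  have := mxmoduleP modU (x^-1)%g; rewrite groupV => /(_ Mx) //.
rewrite perpC //; apply: submx_trans sUUX _.
by rewrite perpC // perpJ.
Qed.


Lemma compA (W W1 : sH) : ~~ (W1 <= perp W)%MS -> (W1 :&: perp W)%MS = 0.
Proof.
move=> nW1; apply/eqP/negPn/negP => nzK.
set K := (W1 :&: perp W)%MS in nzK.
have simW1 := socle_simple W1; have simW := socle_simple W.
have modK : mxmodule rM K.
  apply: capmx_module; first exact: component_mx_module.
  exact: perp_module (component_mx_module _ _).
case: (mxsemisimple_reducible (component_mx_semisimple simW1) modK (capmxSl _ _)).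
move=> C modC defKC dxKC; have dKC := mxdirect_addsP dxKC.
have nzC : C != 0.
  apply: contra nW1 => /eqP C0.
  by rewrite -defKC C0 addsmx0 capmxSr.
have [S1 simS1 sS1K] := clP (mxsimple_exists modK nzK).
have [S2 simS2 sS2C] := clP (mxsimple_exists modC nzC).
have sS1W1 : (S1 <= W1)%MS := submx_trans sS1K (capmxSl _ _).
have sS2W1 : (S2 <= W1)%MS.
  by rewrite -defKC (submx_trans sS2C) ?addsmxSr.
have iso12 : mx_iso rM S1 S2.
  exact: mx_iso_trans (mx_iso_sym (component_mx_iso simW1 simS1 sS1W1))
                      (component_mx_iso simW1 simS2 sS2W1).
have nS2 : ~~ (S2 <= perp W)%MS.
  apply/negP => sS2P.
  have : (S2 <= K :&: C)%MS by rewrite sub_capmx sS2C andbT sub_capmx sS2W1 sS2P.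
  by rewrite dKC submx0; case: simS2 => _ /negPf ->.
case: iso12 => f injf homf defS2.
have ss1 : mxsemisimple rM 1%:M.
  by rewrite -(Clifford_Socle1 irrG sH); apply: Socle_semisimple.
case: (mxsemisimple_reducible ss1 (mxsimple_module simS1) (submx1 S1)).
move=> C' modC' defSC' dxSC'; have dSC := mxdirect_addsP dxSC'.
set P := proj_mx S1 C'.
have cP : centgmx rM P.
  rewrite -row_full_dom_hom -sub1mx.
  apply: submx_trans (proj_mx_hom dSC (mxsimple_module simS1) modC').
  by rewrite defSC'.
have hPf : (P <= dom_hom_mx rM f)%MS.
  by apply: submx_trans homf; rewrite -[P]mul1mx proj_mx_sub.
set Fm := P *m f.
have cF : centgmx rM Fm.
  apply/centgmxP => x Mx.
  by rewrite /Fm -(hom_mxP hPf x Mx) (centgmxP cP x Mx) !mulmxA.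
set Fa := adj Q Fm.
have cFa : centgmx rM Fa.
  apply/centgmxP => x Mx; have Gx := subsetP sMG x Mx; rewrite /=.
  apply: (mx_eq_polar qfQ ndQ) => u v.
  rewrite (mulmxA u Fa) (mulmxA u (rG x) Fa) -{1}[v](repr_mxKV rG Gx).
  rewrite (polarJ (invQ Gx)) (adjP qfQ ndQ).
  have := centgmxP cF _ (groupVr Mx); rewrite /= => eF.
  rewrite -(mulmxA v) -eF mulmxA.
  by rewrite -(polarJ (invQ Gx) u) repr_mxKV // (adjP qfQ ndQ).
have WFa : (W *m Fa <= W)%MS := hom_component_mx simW (centgmx_hom _ cFa).
apply: (negP nS2); apply/rV_subP => v vS2; apply/(perpP qfQ) => w wW.
have [D ->] : exists D, v = D *m S1 *m f.
  have : (v <= S1 *m f)%MS by rewrite defS2.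
  by case/submxP => D ->; exists D; rewrite mulmxA.
have sS1 : (D *m S1 <= S1)%MS := submxMl D S1.
have -> : D *m S1 *m f = D *m S1 *m Fm by rewrite /Fm mulmxA (proj_mx_id dSC sS1).
rewrite polarC -(adjP qfQ ndQ) polarC.
move/(perpP qfQ): (submx_trans sS1 (submx_trans sS1K (capmxSr _ _))); apply.
exact: submx_trans (submxMr Fa wW) WFa.
Qed.


Lemma comp_trans (W0 W : sH) : exists2 g, g \in G & (W :=: W0 *m rG g)%MS.
Proof.
have : W \in orbit (Clifford_action sH) G W0.
  by rewrite (atransPin (subxx _) (Clifford_atrans irrG sH)) ?inE.
case/orbitP => g Gg <-; exists g => //; exact: val_Clifford_act.
Qed.

Lemma rank_comp (W W1 : sH) : \rank W1 = \rank W.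
Proof.
have e1 := Clifford_rank_components irrG W.
have e2 := Clifford_rank_components irrG W1.
have t0 : (0 < #|sH|)%N by apply/card_gt0P; exists W.
by apply/eqP; rewrite -(eqn_pmul2l t0) e1 e2.
Qed.

Lemma perp_eq m1 m2 m3 (U : 'M_(m1, n)) (U' : 'M_(m2, n)) (X : 'M_(m3, n)) :
  (U :=: U')%MS -> (X <= perp U)%MS = (X <= perp U')%MS.
Proof. by move=> eU; rewrite !(perpC qfQ _ X) eU. Qed.

Lemma compB (W : sH) : #|[pred W1 : sH | ~~ (W1 <= perp W)%MS]| = 1%N.
Proof.
have simW := socle_simple W.
have tr := Clifford_rank_components irrG W.
have r0 : (0 < \rank W)%N by rewrite lt0n mxrank_eq0 nz_socle.
set A := [pred W1 : sH | (W1 <= perp W)%MS].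
have cC : (#|A| + #|[predC A]|)%N = #|sH| := cardC A.
have modP : mxmodule rM (perp W) by apply: perp_module; apply: component_mx_module.
have key : (n - \rank W <= #|A| * \rank W)%N.
  rewrite -(rank_perp qfQ ndQ).
  have e := capmx_subSocle (sG := sH) predT modP.
  have s1 : (perp W <= \sum_(W1 : sH) (perp W :&: W1))%MS.
    rewrite -e sub_capmx submx_refl /=.
    by have := Clifford_Socle1 irrG sH; rewrite /Socle => ->; apply: submx1.
  apply: leq_trans (mxrankS s1) _.
  apply: leq_trans (mxrank_sum_leqif _).1 _ => /=.
  rewrite -sum_nat_const [X in (_ <= X)%N]big_mkcond /=; apply: leq_sum => W1 _.
  case: ifP => [_ | nA].
    by rewrite -(rank_comp W W1); apply: mxrankS; apply: capmxSr.
  by rewrite capmxC (compA (negbT nA)) mxrank0.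
have nC : (0 < #|[predC A]|)%N.
  rewrite lt0n; apply/negP => /eqP c0.
  have allA := card0_eq c0.
  have : (1%:M <= perp W)%MS.
    have := Clifford_Socle1 irrG sH; rewrite /Socle => <-.
    apply/sumsmx_subP => W1 _; move: (allA W1); rewrite !inE /=.
    by case: (W1 <= perp W)%MS.
  by move/(perp1 qfQ ndQ)/eqP; rewrite (negPf (nz_socle W)).
have : (#|sH| - 1 <= #|A|)%N.
  by rewrite -(leq_pmul2r r0) mulnBl mul1n tr.
have -> : #|[pred W1 : sH | ~~ (W1 <= perp W)%MS]| = #|[predC A]|.
  by apply: eq_card => W1; rewrite !inE.
move=> h; lia.
Qed.

Lemma homog (a : gT) (al be ga : F) (P : 'M[F]_n) :
  a \in M -> #|sH| = 1%N ->
  (forall x y, x \in M -> y \in M -> rG x *m rG y = rG y *m rG x) ->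
  P = al%:M + be *: rG a + ga *: rG (a^-1)%g ->
  ~~ (P \in unitmx) -> P = 0.
Proof.
move=> Ma t1 comm eP nuP.
have Ma' : (a^-1)%g \in M by rewrite groupV.
have cPM : centgmx rM P.
  apply/centgmxP => x Mx /=; rewrite eP !mulmxDl !mulmxDr -!scalemxAl -!scalemxAr.
  by rewrite (comm a x) // (comm _ x Ma') // scalar_mxC.
have hom_comm (f S : 'M_n) : (S <= dom_hom_mx rM f)%MS -> S *m P *m f = S *m f *m P.
  move/hom_mxP => hf; rewrite eP !mulmxDr !mulmxDl -!scalemxAr -!scalemxAl.
  by rewrite (hf a Ma) (hf _ Ma') !mul_mx_scalar -scalemxAl.
have nzK : kermx P != 0 by rewrite kermx_eq0 row_free_unit.
have modK : mxmodule rM (kermx P) := kermx_centg_module cPM.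
have [S simS sSK] := clP (mxsimple_exists modK nzK).
pose W := PackSocle (component_socle sH simS).
have eW : (W : 'M_n) = component_mx rM S by rewrite PackSocleK.
have fullW : (1%:M <= W)%MS.
  have := Clifford_rank_components irrG W; rewrite t1 mul1n => rW.
  by rewrite sub1mx /row_full rW.
have sCK : (component_mx rM S <= kermx P)%MS.
  have [I [Wf isoW ->]] := component_mx_def simS.
  apply/sumsmx_subP => i _; case: (isoW i) => f injf homf defW.
  rewrite -defW sub_kermx -hom_comm //.
  by move/sub_kermxP: sSK => ->; rewrite mul0mx.
have : (1%:M <= kermx P)%MS by rewrite (submx_trans fullW) // eW.
by move/sub_kermxP; rewrite mul1mx.
Qed.

Hypothesis oddn : odd n.

Lemma comp_orth (W W1 : sH) : W != W1 -> (W1 <= perp W)%MS.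
Proof.
pose sg (W : sH) := odflt W [pick W1 : sH | ~~ (W1 <= perp W)%MS].
have sgP (W' : sH) : ~~ (sg W' <= perp W')%MS.
  rewrite /sg; case: pickP => [W1' -> // | none].
  have e0 : [pred W1 : sH | ~~ (W1 <= perp W')%MS] =i pred0.
    by move=> W1'; rewrite inE /=; apply: none.
  by have := compB W'; rewrite (eq_card0 e0).
have sgU (W' W1' : sH) : ~~ (W1' <= perp W')%MS -> W1' = sg W'.
  move=> h; have [x ex] := mem_card1 (compB W').
  move: (ex W1') (ex (sg W')); rewrite !inE /= h sgP => /esym/eqP -> /esym/eqP ->.
  by [].
have sgK : involutive sg.
  by move=> W'; apply/esym/sgU; rewrite perpC //; apply: sgP.
have odd_t : odd #|sH|.
  have e := Clifford_rank_components irrG W.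
  have : odd (#|sH| * \rank W) by rewrite e.
  by rewrite oddM => /andP[].
have [W0 fW0] := inv_fixpoint sgK odd_t.
have fix_all (W' : sH) : sg W' = W'.
  have [g Gg eW] := comp_trans W0 W'.
  apply/esym/sgU; rewrite eW (perp_eq _ eW) perpJ //.
  by have := sgP W0; rewrite fW0.
move=> neq; apply/negPn/negP => h.
by move: neq; rewrite (sgU _ _ h) fix_all eqxx.
Qed.

Hypothesis two : (2%:R : F) != 0.

Lemma scalar0 : (0 : F)%:M = 0 :> 'M[F]_n.
Proof. by apply/matrixP => i j; rewrite !mxE mul0rn. Qed.

Lemma prim_abelian (a : gT) : a \in M -> #|sH| = 1%N ->
  (forall x y, x \in M -> y \in M -> rG x *m rG y = rG y *m rG x) ->
  rG a = 1%:M \/ rG a = - 1%:M.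
Proof.
move=> Ma t1 comm; have Ga := subsetP sMG a Ma.
have uX := repr_mx_unit rG Ga.
have D0 : rG a - invmx (rG a) = 0.
  apply: (homog (al := 0) (be := 1) (ga := -1) Ma t1 comm).
    by rewrite scalar0 add0r scale1r scaleN1r repr_mxV.
  exact: (skew_singular qfQ ndQ two oddn (skew_XXinv qfQ uX (invQ Ga))).
have XX : rG a *m rG a = 1%:M.
  by move/eqP: D0; rewrite subr_eq0 => /eqP {2}->; rewrite mulmxV.
have e : (rG a - 1%:M) *m (rG a + 1%:M) = 0.
  by rewrite mulmxDr mulmxBl XX mulmx1 mul1mx addrA subrK subrr.
case: (boolP ((rG a - 1%:M) \in unitmx)) => u1.
  right; apply/eqP; rewrite -subr_eq0 opprK; apply/eqP.
  by rewrite -(mulKmx u1 (rG a + 1%:M)) e mulmx0.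
left; apply/eqP; rewrite -subr_eq0; apply/eqP.
apply: (homog (al := -1) (be := 1) (ga := 0) Ma t1 comm) => //.
rewrite scale1r scale0r addr0 addrC; congr (_ + _).
by apply/matrixP => i j; rewrite !mxE mulNrn.
Qed.

Hypothesis solG : solvable G.
Hypothesis IH : forall m, (m < n)%N -> main_stmt F m.

Lemma imprim : (1 < #|sH|)%N -> orth_basis Q G rG.
Proof.
move=> t1.
have [W0 _] : exists W0 : sH, true.
  by case/card_gt0P: (ltnW t1) => W0 _; exists W0.
set H := rstabs_group rG (W0 : 'M_n).
have sHG : H \subset G := rstabs_sub rG W0.
have simW0 : mxsimple (subg_repr rG sHG) W0 := Clifford_rstabs_simple irrG W0.
have modW0 := mxsimple_module simW0.
set r := \rank (W0 : 'M_n).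
set rW := submod_repr modW0.
have irrW : mx_irreducible rW := (submod_mx_irr modW0).2 simW0.
have tr : (#|sH| * r)%N = n := Clifford_rank_components irrG W0.
have r0 : (0 < r)%N by rewrite lt0n mxrank_eq0 nz_socle.
have rn : (r < n)%N by rewrite -[X in (_ < X)%N]tr ltn_Pmull.
have oddr : odd r.
  have : odd (#|sH| * r) by rewrite tr.
  by rewrite oddM => /andP[].
pose vs (x : 'rV[F]_r) : 'rV[F]_n := @val_submod F n (W0 : 'M_n) 1 x.
pose Qw (x : 'rV[F]_r) := Q (vs x).
have pQw x y : polar Qw x y = polar Q (vs x) (vs y).
  by rewrite /polar /Qw /vs linearD.
have qfw : is_quadform Qw.
  split; [|split].
  - by move=> a x; rewrite /Qw /vs linearZ /=; case: qfQ => h _; apply: h.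
  - by move=> u v w; rewrite !pQw /vs linearD (polarDl qfQ).
  - by move=> a u v; rewrite !pQw /vs linearZ (polarZl qfQ).
have ndw : qf_nondegenerate Qw.
  move=> x hx; apply: val_submod_inj; rewrite linear0.
  apply: (perp1 qfQ ndQ).
  have := Clifford_Socle1 irrG sH; rewrite /Socle => <-.
  apply/sumsmx_subP => W1 _; apply/rV_subP => w wW1.
  apply/(perpP qfQ) => y /submxP[D ->].
  rewrite [D]mx11_scalar mul_scalar_mx (polarZr qfQ).
  suff -> : polar Q w (vs x) = 0 by rewrite mulr0.
  case: (eqVneq W1 W0) => [eW | ne].
    move: wW1; rewrite eW => wW0.
    rewrite -(in_submodK wW0) polarC.
    by have := hx (in_submod (W0 : 'M_n) w); rewrite pQw => ->.
  move/rV_subP/(_ _ (val_submodP x)): (comp_orth ne).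
  by move/(perpP qfQ)/(_ w wW1); rewrite polarC.

have invw : forall h, h \in H -> forall x, Qw (x *m rW h) = Qw x.
  move=> h Hh z; rewrite /Qw /vs /= (val_submodJ modW0) //=. 
  exact: (invQ (subsetP sHG h Hh) (val_submod z)).
have [v' [anw orw pmw]] :=
  @IH r rn gT H rW Qw two oddr qfw ndw invw (solvableS sHG solG) irrW.
pose x_ (W : sH) := odflt 1%g [pick g in G | (W == W0 *m rG g)%MS].
have xP (W : sH) : x_ W \in G /\ (W :=: W0 *m rG (x_ W))%MS.
  rewrite /x_; case: pickP => [g /andP[Gg /eqmxP eW] | none] //=.
  have [g Gg eW] := comp_trans W0 W.
  by move: (none g); rewrite Gg (introT eqmxP eW).
pose u (p : (sH * 'I_r)%type) := vs (v' p.2) *m rG (x_ p.1).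
have uW p : (u p <= p.1)%MS.
  by case: (xP p.1) => _ e; rewrite /u e submxMr // /vs val_submodP.
have bu W k k1 : polar Q (u (W, k)) (u (W, k1)) = polar Qw (v' k) (v' k1).
  by rewrite /u /= (polarJ (invQ (xP W).1)) pQw.
apply: (@orth_fam_reindex _ _ _ _ _ _ _ u).
  by rewrite card_prod card_ord.
split.
- by move=> [W k]; rewrite bu; apply: anw.
- move=> [W k] [W1 k1] ne; case: (eqVneq W W1) => [eW | nW].
    subst W1; rewrite bu; apply: orw.
    by apply: contra ne => /eqP ->.
  move/rV_subP/(_ _ (uW (W1, k1))): (comp_orth nW).
  by move/(perpP qfQ)/(_ _ (uW (W, k))); rewrite polarC.
move=> g Gg [W k].
set W' := Clifford_action sH W g.
have eW' : (W' :=: W *m rG g)%MS := val_Clifford_act W Gg.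
have [GxW eW] := xP W; have [GxW' eW''] := xP W'.
set h := (x_ W * g * (x_ W')^-1)%g.
have Gh : h \in G by rewrite !groupM ?groupV.
have Hh : h \in H.
  rewrite inE Gh /= !repr_mxM ?groupM ?groupV // !mulmxA.
  have s1 : (W0 *m rG (x_ W) *m rG g <= W')%MS.
    by rewrite eW' submxMr // eW.
  apply: submx_trans (submxMr _ s1) _.
  rewrite -[X in (_ <= X)%MS](repr_mxK rG GxW' W0) submxMr //.
  by rewrite eW''.
have [j [c hc]] := pmw h Hh k.
exists (W', j), c; rewrite /u /=.
have ehx : rG (x_ W) *m rG g = rG h *m rG (x_ W').
  by rewrite -!repr_mxM ?groupM ?groupV // /h mulgKV.
rewrite -mulmxA ehx mulmxA /vs -(val_submodJ modW0) //.
have hc' : v' k *m submod_mx modW0 h = c *: v' j := hc.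
by rewrite hc' linearZ /= -scalemxAl.
Qed.

End Cliff.

Lemma main_all (F : fieldType) (n : nat) : main_stmt F n.
Proof.
elim/ltn_ind: n => n IH gT G rG Q two oddn qfQ ndQ invQ solG irrG.
have n0 : (0 < n)%N by rewrite lt0n; apply: contraTneq oddn => ->.
set Z := [set g in G | (rG g == 1%:M) || (rG g == - 1%:M)].
case: (boolP (G \subset Z)) => [GZ | nGZ].
  have hZ g : g \in G -> rG g = 1%:M \/ rG g = - 1%:M.
    move=> Gg; have := subsetP GZ g Gg; rewrite inE Gg /=.
    by case/orP => /eqP ->; [left | right].
  pose i0 := Ordinal n0; pose v := delta_mx 0 i0 : 'rV[F]_n.
  have nzv : v != 0.
    apply/eqP => /matrixP /(_ 0 i0); rewrite !mxE !eqxx /= => /eqP.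
    by rewrite oner_eq0.
  have modv : mxmodule rG v.
    apply/mxmoduleP => g Gg; case: (hZ g Gg) => ->.
      by rewrite mulmx1.
    by rewrite mulmxN mulmx1 eqmx_opp.
  have fullv : row_full <<v>>%MS.
    case/mx_irrP: irrG => _; apply; first by rewrite (eqmx_module _ (genmxE v)).
    by rewrite -mxrank_eq0 mxrank_gen mxrank_eq0.
  have n1 : n = 1%N.
    move: (rank_leq_row v); rewrite -mxrank_gen (eqP fullv) => h.
    by apply/eqP; rewrite eqn_leq h n0.
  have allv w : exists c, w = c *: v.
    have : (w <= v)%MS.
      by rewrite (submx_trans (submx1 _)) // -(genmxE v) sub1mx.
    by case/submxP => D ->; exists (D 0 0); rewrite {1}[D]mx11_scalar mul_scalar_mx.
  exists (fun _ => v); split.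
  - move=> _; apply/negP => /eqP b0; apply/negP: nzv; apply/negPn/eqP.
    by apply: ndQ => w; have [c ->] := allv w; rewrite (polarZr qfQ) b0 mulr0.
  - move=> i j nij; exfalso; apply: (negP nij); apply/eqP/val_inj.
    by move: (ltn_ord i) (ltn_ord j) n1 => /= hi hj e; rewrite /=; lia.
  - move=> g Gg i; exists i; case: (hZ g Gg) => ->.
      by exists 1; rewrite mulmx1 scale1r.
    by exists (-1); rewrite mulmxN mulmx1 scaleN1r.
have Z1 : (1%g : gT) \in Z by rewrite inE group1 repr_mx1 eqxx.
have exP : exists k, [pred k | (G^`(k))%g \subset Z] k.
  case/derivedP: solG => k hk; exists k; rewrite /= hk.
  by apply/subsetP => x /set1P ->.
case: (ex_minnP exP) => m Pm minm.
case: m Pm minm => [|m] Pm minm.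
  by move: Pm; rewrite /= derg0 (negPf nGZ).
have nMZ : ~~ ((G^`(m))%g \subset Z).
  by apply/negP => h; have := minm m h; rewrite ltnn.
have nsMG : ([group of (G^`(m))%g] <| G)%g := der_normal m G.
have sMG := normal_sub nsMG.
have comm : forall x y, x \in [group of (G^`(m))%g] -> y \in [group of (G^`(m))%g] ->
    rG x *m rG y = rG y *m rG x.
  move=> x y Mx My; have Gx := subsetP sMG x Mx; have Gy := subsetP sMG y My.
  have : ([~ x, y])%g \in Z by apply: (subsetP Pm); rewrite /= dergSn mem_commg.
  rewrite inE => /andP[_].
  rewrite commgEl conjgE !repr_mxM ?groupM ?groupV // !repr_mxV //.
  have uX := repr_mx_unit rG Gx; have uY := repr_mx_unit rG Gy.
  case/orP => /eqP e.
    have e1 : invmx (rG y) *m (rG x *m rG y) = rG x.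
      by rewrite -[RHS]mulmx1 -e mulmxA mulmxV // mul1mx.
    by rewrite -[LHS](mulKVmx uY) e1.
  have e1 : invmx (rG y) *m rG x *m rG y = - rG x.
    by rewrite -mulmxA -[LHS](mulKVmx uX) e mulmxN mulmx1.
  by case: (anti_conj_singular two oddn uX uY e1).
have [a Ma nZa] := subsetPn nMZ.
have [sH] : inhabited (socleType (subg_repr rG (normal_sub nsMG))).
  apply: clP; move=> b hb; apply: (socle_exists (subg_repr rG (normal_sub nsMG)) b) => sH; apply: hb.
  exact: (inhabits sH).
have t0 : (0 < #|sH|)%N.
  have nz1 : (1%:M : 'M[F]_n) != 0 by rewrite -mxrank_eq0 mxrank1 -lt0n.
  have [S simS _] := clP (mxsimple_exists (mxmodule1 (subg_repr rG (normal_sub nsMG))) nz1).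
  by apply/card_gt0P; exists (PackSocle (component_socle sH simS)).
case: (ltngtP 1 #|sH|) => [t1 | t1 | t1].
- exact: (imprim qfQ ndQ irrG invQ oddn two solG IH t1).
- by move: t0 t1; lia.
- have := prim_abelian qfQ ndQ irrG invQ oddn two Ma (esym t1) comm.
  by case=> e; move: nZa; rewrite inE (subsetP sMG a Ma) e eqxx ?orbT.
Qed.

Theorem theorem1p1 (F : fieldType) (n : nat) (Q : 'rV[F]_n -> F)
    (gT : finGroupType) (G : {group gT}) (rG : mx_representation F G n) :
  (2%:R : F) != 0 ->
  odd n ->
  is_quadform Q ->
  qf_nondegenerate Q ->
  mx_faithful rG ->
  (forall g, g \in G -> forall v, Q (v *m rG g) = Q v) ->
  solvable G ->
  mx_irreducible rG ->
  exists W : 'I_n -> 'M[F]_n,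
    [/\ (forall i, \rank (W i) = 1%N),
        (\sum_i W i :=: 1%:M)%MS,
        mxdirect (\sum_i W i),
        (forall i j, i != j -> forall u v : 'rV_n,
            (u <= W i)%MS -> (v <= W j)%MS -> polar Q u v = 0)
      & (forall g, g \in G -> forall i, exists j, (W i *m rG g :=: W j)%MS)].
Proof.
move=> two oddn qfQ ndQ _ invQ solG irrG.
have [v [an or pm]] := main_all two oddn qfQ ndQ invQ solG irrG.
have nzv i : v i != 0.
  by apply: contraNneq (an i) => ->; rewrite polar0l.
have onev i (u : 'rV_n) : (u <= <<v i>>)%MS -> exists c, u = c *: v i.
  rewrite genmxE => /submxP[D ->]; exists (D 0 0).
  by rewrite {1}[D]mx11_scalar mul_scalar_mx.
pose Vm : 'M[F]_n := \matrix_i v i.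
have rowV i : row i Vm = v i by rewrite rowK.
have freeV : row_free Vm.
  rewrite -kermx_eq0; apply/eqP/row_matrixP => k; rewrite row0.
  set w := row k _; have wK : w *m Vm = 0 by apply/sub_kermxP; apply: row_sub.
  apply/rowP => j.
  have := congr1 (fun z => polar Q z (v j)) wK.
  rewrite polar0l // mulmx_sum_row (polar_suml qfQ) (bigD1 j) //= big1.
    rewrite addr0 rowV (polarZl qfQ) => /eqP; rewrite mulf_eq0 (negPf (an j)) orbF.
    by move/eqP ->; rewrite mxE.
  by move=> i nij; rewrite rowV (polarZl qfQ) or ?mulr0.
have fullV : row_full Vm by rewrite row_full_unit -row_free_unit.
have sumE : (\sum_i <<v i>> :=: 1%:M)%MS.
  apply/eqmxP/andP; split; first exact: submx1.
  rewrite -sub1mx in fullV; apply: submx_trans fullV _.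
  by apply/row_subP => i; rewrite rowV (sumsmx_sup i) // genmxE.
exists (fun i => <<v i>>%MS); split => //.
- by move=> i; rewrite mxrank_gen rank_rV nzv.
- rewrite mxdirectE /= sumE mxrank1.
  rewrite (eq_bigr (fun _ => 1%N)) ?sum_nat_const ?card_ord ?muln1 //.
  by move=> i _; rewrite mxrank_gen rank_rV nzv.
- move=> i j nij u w /onev[a ->] /onev[c ->].
  by rewrite (polarZl qfQ) (polarZr qfQ) or ?mulr0.
- move=> g Gg i; have [j [c e]] := pm g Gg i; exists j.
  have nzc : c != 0.
    apply: contraNneq (nzv i) => c0; move: e; rewrite c0 scale0r => e.
    by rewrite -(repr_mxK rG Gg (v i)) e mul0mx.
  apply: eqmx_trans (eqmxMr _ (genmxE _)) _.
  rewrite e; apply: eqmx_trans (eqmx_scale _ nzc) _.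
  exact: eqmx_sym (genmxE _).
Qed.
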